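(* Let $L$ and $M$ be linear partial differential operators in $\mathbb{R}^n$ with coefficients in $\mathbf{F}$ such that $\mathrm{ord}\, L \geq 1$, $\mathrm{ord}\, M = 1$, and $L$ is not right divisible by $M$. Suppose they satisfy two relations $M_1L = L_1M$ and $\widetilde{M}_1L = \widetilde{L}_1M$ with differential operators $M_1, L_1, \widetilde{M}_1, \widetilde{L}_1$, where $\mathrm{Sym}\, L = \mathrm{Sym}\, L_1 = \mathrm{Sym}\, \widetilde{L}_1$. Then $M_1 = \widetilde{M}_1$ and $L_1 = \widetilde{L}_1$.
   Context: $\mathbf{F}$ is a differential field of functions of $x_1,\ldots,x_n$; operators lie in $\mathbf{F}[D_{x_1},\ldots,D_{x_n}]$. $\mathrm{Sym}$ denotes the principal symbol. $L$ is right divisible by $M$ if $L=SM$ for some differential operator $S$. *)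

(* Defs.v *)
From HB Require Import structures.
From mathcomp Require Import all_boot all_order all_algebra.
From mathcomp Require Import mpoly.

Set Implicit Arguments. Unset Strict Implicit. Unset Printing Implicit Defensive.
Import Order.TTheory GRing.Theory Num.Theory.
Local Open Scope ring_scope.

Definition is_derivation (F : fieldType) (d : F -> F) : Prop :=
  (forall x y, d (x + y) = d x + d y) /\ (forall x y, d (x * y) = d x * y + x * d y).

Definition commuting_derivations (F : fieldType) (n : nat) (der : 'I_n -> F -> F) : Prop :=
  (forall i, is_derivation (der i)) /\
  (forall i j x, der i (der j x) = der j (der i x)).

(* Linear differential operators  L = sum_alpha a_alpha D^alpha  (coeffs  *)
(* on the left) are represented by their coefficient families, i.e. by    *)
(* the mpoly  sum_alpha a_alpha 'X_[alpha]  in {mpoly F[n]}.  Addition is *)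
(* the mpoly addition; the (noncommutative) composition is [dmul] below.  *)

Section DiffOp.
Variables (F : fieldType) (n : nat) (der : 'I_n -> F -> F).

Definition dpow (g : 'X_{1..n}) (x : F) : F :=
  foldr (fun i y => iter (g i) (der i) y) x (enum 'I_n).

Definition mbin (a g : 'X_{1..n}) : nat := (\prod_(i < n) 'C(a i, g i))%N.

(* composition of operators, via the Leibniz rule
   D^alpha (q D^beta) = sum_(gamma <= alpha) binom(alpha,gamma) (d^gamma q) D^(alpha-gamma+beta) *)
Definition dmul (P Q : {mpoly F[n]}) : {mpoly F[n]} :=
  \sum_(a <- msupp P) \sum_(b <- msupp Q)
    \sum_(g : 'X_{1..n < (mdeg a).+1} | (bmnm g <= a)%MM)
      (P@_a * (mbin a g)%:R * dpow g (Q@_b)) *: 'X_[(a - g + b)%MM].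

(* order of an operator: max |alpha| with a_alpha <> 0 (0 for L = 0) *)
Definition ord (P : {mpoly F[n]}) : nat := (msize P).-1.

Definition Sym (P : {mpoly F[n]}) : {mpoly F[n]} :=
  \sum_(m <- msupp P | mdeg m == ord P) P@_m *: 'X_[m].

Definition right_divisible (L M : {mpoly F[n]}) : Prop :=
  exists S : {mpoly F[n]}, L = dmul S M.

End DiffOp.

(* Main.v *)
Require Import Defs.
From HB Require Import structures.
From mathcomp Require Import all_boot all_order all_algebra.
From mathcomp Require Import mpoly.
From mathcomp Require Import zify.
Import Order.TTheory GRing.Theory.
Local Open Scope ring_scope.
Set Implicit Arguments. Unset Strict Implicit.

Section H.
Variables (F : fieldType) (n : nat) (der : 'I_n -> F -> F).
Implicit Types (P Q R : {mpoly F[n]}).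

Lemma dpow0 x : dpow der 0%MM x = x.
Proof. rewrite /dpow; elim: (enum 'I_n) => //= i s ->; by rewrite mnm0E. Qed.

Lemma mbin0 (a : 'X_{1..n}) : mbin a 0%MM = 1%N.
Proof. rewrite /mbin big1 // => i _; by rewrite mnm0E bin0. Qed.

Definition T (a : 'X_{1..n}) Q : {mpoly F[n]} :=
  \sum_(b <- msupp Q) \sum_(g : 'X_{1..n < (mdeg a).+1} | (bmnm g <= a)%MM)
      ((mbin a g)%:R * dpow der g (Q@_b)) *: 'X_[(a - g + b)%MM].

Lemma dmulE P Q : dmul der P Q = \sum_(a <- msupp P) P@_a *: T a Q.
Proof.
rewrite /dmul; apply: eq_bigr => a _; rewrite /T scaler_sumr; apply: eq_bigr => b _.
rewrite scaler_sumr; apply: eq_bigr => g _; by rewrite scalerA !mulrA.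
Qed.

Lemma sum_ext (V : zmodType) P (s : seq 'X_{1..n}) (f : 'X_{1..n} -> F -> V) :
  uniq s -> {subset msupp P <= s} -> (forall a, f a 0 = 0) ->
  \sum_(a <- msupp P) f a P@_a = \sum_(a <- s) f a P@_a.
Proof.
move=> us sub f0; rewrite [RHS](bigID (fun a => a \in msupp P)) /=.
rewrite [X in _ = _ + X]big1 ?addr0; last by move=> a /memN_msupp_eq0 ->.
rewrite -[RHS]big_filter; apply: perm_big; apply: uniq_perm.
- exact: msupp_uniq.
- exact: filter_uniq.
move=> x; rewrite mem_filter; case xP: (x \in msupp P) => //=; by rewrite sub.
Qed.

Lemma dmulE_s P Q (s : seq 'X_{1..n}) : uniq s -> {subset msupp P <= s} ->
  dmul der P Q = \sum_(a <- s) P@_a *: T a Q.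
Proof.
move=> us sub; rewrite dmulE (@sum_ext _ P s (fun a c => c *: T a Q)) //.
by move=> a; rewrite scale0r.
Qed.

Lemma dmulB P R Q : dmul der (P - R) Q = dmul der P Q - dmul der R Q.
Proof.
set s := undup (msupp P ++ msupp R ++ msupp (P - R)).
have us : uniq s := undup_uniq _.
rewrite !(@dmulE_s _ _ s) //; last 3 first.
- by move=> x xi; rewrite mem_undup !mem_cat xi ?orbT.
- by move=> x xi; rewrite mem_undup !mem_cat xi ?orbT.
- by move=> x xi; rewrite mem_undup !mem_cat xi ?orbT.
rewrite -sumrB; apply: eq_bigr => a _; by rewrite mcoeffB scalerBl.
Qed.

Lemma dmulZ c P Q : dmul der (c *: P) Q = c *: dmul der P Q.
Proof.
set s := undup (msupp P ++ msupp (c *: P)).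
have us : uniq s := undup_uniq _.
rewrite !(@dmulE_s _ _ s) //; last 2 first.
- by move=> x xi; rewrite mem_undup !mem_cat xi ?orbT.
- by move=> x xi; rewrite mem_undup !mem_cat xi ?orbT.
rewrite scaler_sumr; apply: eq_bigr => a _; by rewrite mcoeffZ scalerA.
Qed.

Lemma dmul0 Q : dmul der 0 Q = 0.
Proof. by rewrite dmulE msupp0 big_nil. Qed.

Lemma dmulC c Q : dmul der c%:MP Q = c *: Q.
Proof.
rewrite (@dmulE_s _ _ [:: 0%MM]) //; last first.
  by move=> m; rewrite mcoeff_msupp mcoeffC inE; case: (m == 0%MM); rewrite ?mulr0 ?eqxx.
rewrite big_seq1 mcoeffC eqxx mulr1 /T; congr (_ *: _).
rewrite {3}(mpolyE Q); apply: eq_bigr => b _.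
rewrite (big_pred1 bm0) /=; last first.
  move=> g /=; rewrite -(inj_eq val_inj) /=.
  apply/idP/idP => [h|/eqP ->]; last exact: lepm_refl.
  by apply/eqP/mnmP => i; move/mnm_lepP: h => /(_ i); rewrite mnm0E leqn0 => /eqP.
by rewrite mbin0 dpow0 mul1r subm0 add0m.
Qed.

Lemma msize_sum_le (I : eqType) (r : seq I) (Fn : I -> {mpoly F[n]}) (Pr : pred I) K :
  (forall i, i \in r -> Pr i -> msize (Fn i) <= K)%N ->
  (msize (\sum_(i <- r | Pr i) Fn i) <= K)%N.
Proof.
move=> h; rewrite big_seq_cond; apply: (leq_trans (mmeasure_sum _ _ _ _)).
elim/big_ind: _ => //; first by move=> x y hx hy; rewrite geq_max hx hy.
by move=> i /andP [hi hp]; apply: h.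
Qed.

Lemma dmul_size P Q : (msize (dmul der P Q) <= (msize P).-1 + (msize Q).-1 + 1)%N.
Proof.
apply: msize_sum_le => a aP _; apply: msize_sum_le => b bQ _.
apply: msize_sum_le => g _ ga.
apply: (leq_trans (msizeZ_le _ _)); rewrite msizeX addn1 ltnS mdegD.
have ha := msize_mdeg_lt aP; have hb := msize_mdeg_lt bQ.
apply: leq_add; last by rewrite -ltnS (ltn_predK hb).
by rewrite (leq_trans (mdegB _ _)) // -ltnS (ltn_predK ha).
Qed.

Lemma mdeg_subm {a g : 'X_{1..n}} : (g <= a)%MM -> (mdeg (a - g) + mdeg g)%N = mdeg a.
Proof. by move=> h; rewrite -mdegD submK. Qed.

Lemma dmul_lead P Q : P != 0 -> Q != 0 ->
  (dmul der P Q)@_(mlead P + mlead Q)%MM = P@_(mlead P) * Q@_(mlead Q).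
Proof.
move=> nP nQ; set aP := mlead P; set bQ := mlead Q.
have le_sub (a g b : 'X_{1..n}) : ((a - g + b)%MM <= (a + b)%MM)%O.
  by apply: lem_add => //; apply: lem_leo; apply: lem_subr.
rewrite /dmul raddf_sum (bigD1_seq aP) ?mlead_supp ?msupp_uniq //=.
rewrite [X in _ + X]big_seq_cond [X in _ + X]big1 ?addr0; last first.
  move=> a /andP[ain ne]; rewrite raddf_sum big1_seq // => b /andP[_ bin].
  rewrite raddf_sum big1 // => g _.
rewrite /= mcoeffZ mcoeffX.
  suff -> : ((a - g + b)%MM == (aP + bQ)%MM) = false by rewrite mulr0.
  apply: lt_eqF; apply: (le_lt_trans (le_sub _ _ _)).
  apply: ltmc_le_add; last exact: msupp_le_mlead.
  by rewrite lt_neqAle ne msupp_le_mlead.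
rewrite raddf_sum (bigD1_seq bQ) ?mlead_supp ?msupp_uniq //=.
rewrite [X in _ + X]big_seq_cond [X in _ + X]big1 ?addr0; last first.
  move=> b /andP[bin ne].
  rewrite raddf_sum big1 // => g _; rewrite /= mcoeffZ mcoeffX.
  suff -> : ((aP - g + b)%MM == (aP + bQ)%MM) = false by rewrite mulr0.
  apply: lt_eqF; apply: (le_lt_trans (le_sub _ _ _)).
  apply: lemc_lt_add => //.
  by rewrite lt_neqAle ne msupp_le_mlead.
rewrite raddf_sum (bigD1 bm0) /= ?le0m; last by apply/mnm_lepP => i; rewrite mnm0E.
rewrite [X in _ + X]big1 ?addr0; last first.
  move=> g /andP[ga ne]; rewrite /= mcoeffZ mcoeffX.
  suff -> : ((aP - g + bQ)%MM == (aP + bQ)%MM) = false by rewrite mulr0.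
  apply/negP => /eqP /(congr1 mdeg); rewrite !mdegD => /eqP; rewrite eqn_add2r.
  move=> /eqP e; have h := mdeg_subm ga; rewrite e in h.
  have : (mdeg aP + mdeg g == mdeg aP + 0)%N by rewrite addn0 h.
  rewrite eqn_add2l mdeg_eq0 => /eqP h0.
  by move/eqP: ne; apply; apply: val_inj; rewrite /= h0.
by rewrite /= mcoeffZ mcoeffX subm0 eqxx mbin0 dpow0 !mulr1.
Qed.

Lemma ord_mlead P : P != 0 -> ord P = mdeg (mlead P).
Proof. by move=> nP; rewrite /ord -(mlead_deg nP). Qed.

Lemma ord_ge P m : P@_m != 0 -> (mdeg m <= ord P)%N.
Proof.
move=> h; have := msize_mdeg_lt (m:=m) (p:=P); rewrite mcoeff_msupp h => /(_ isT) lt.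
by rewrite /ord -ltnS (ltn_predK lt).
Qed.

Lemma dmul_ord P Q : P != 0 -> Q != 0 ->
  dmul der P Q != 0 /\ ord (dmul der P Q) = (ord P + ord Q)%N.
Proof.
move=> nP nQ; have hc := dmul_lead nP nQ.
have nz : (dmul der P Q)@_(mlead P + mlead Q)%MM != 0.
  by rewrite hc mulf_neq0 // mleadc_eq0.
split; first by apply: contraNneq nz => ->; rewrite mcoeff0.
apply/eqP; rewrite eqn_leq; apply/andP; split.
  have := dmul_size P Q; rewrite /ord addn1 => h.
  by move: h; case: (msize (dmul der P Q)) => //= k; rewrite ltnS.
by have := ord_ge nz; rewrite mdegD -!ord_mlead.
Qed.

Lemma SymE P m : (Sym P)@_m = if mdeg m == ord P then P@_m else 0.
Proof.
rewrite /Sym raddf_sum /=.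
rewrite (eq_bigr (fun x => P@_x * (x == m)%:R)); last by move=> x _; rewrite /= mcoeffZ mcoeffX.
rewrite big_mkcond /=.
case mP: (m \in msupp P).
  rewrite (bigD1_seq m) ?msupp_uniq //= eqxx mulr1 big1 ?addr0; first by case: ifP.
  by move=> x /negbTE ->; rewrite mulr0; case: ifP.
rewrite big1_seq; first by rewrite (memN_msupp_eq0 (negbT mP)); case: ifP.
move=> x /andP[_ xP]; have -> : (x == m) = false by apply/negP => /eqP e; rewrite -e xP in mP.
by rewrite mulr0; case: ifP.
Qed.

Lemma Sym_nz P : P != 0 -> (Sym P)@_(mlead P) != 0.
Proof. by move=> nP; rewrite SymE -ord_mlead // eqxx mleadc_eq0. Qed.

Lemma Sym_eq P R : P != 0 -> Sym P = Sym R -> R != 0 /\ ord R = ord P.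
Proof.
move=> nP e.
have nR : R != 0.
  apply/negP => /eqP R0; have := Sym_nz nP; rewrite e R0 SymE mcoeff0; by case: ifP; rewrite eqxx.
split => //; have := Sym_nz nR; rewrite -e SymE; case: ifP => [/eqP <- _|]; last by rewrite eqxx.
by rewrite ord_mlead.
Qed.
End H.

Unset Implicit Arguments. Set Strict Implicit.

Theorem proposition4 (F : fieldType) (n : nat) (der : 'I_n -> F -> F)
  (Hder : commuting_derivations der)
  (Hchar : [pchar F] =i pred0)
  (L M M1 L1 tM1 tL1 : {mpoly F[n]}) :
  (1 <= ord L)%N ->
  ord M = 1%N ->
  ~ right_divisible der L M ->
  dmul der M1 L = dmul der L1 M ->
  dmul der tM1 L = dmul der tL1 M ->
  Sym L = Sym L1 ->
  Sym L1 = Sym tL1 ->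
  M1 = tM1 /\ L1 = tL1.
Proof.
move=> oL oM nrd e1 e2 s1 s2.
have nL : L != 0 by apply: contraTneq oL => ->; rewrite /ord msize0.
have nM : M != 0 by apply/eqP => M0; move: oM; rewrite M0 /ord msize0.
have [nL1 oL1] := Sym_eq nL s1.
have [ntL1 otL1] := Sym_eq nL1 s2.
set D := M1 - tM1; set E := L1 - tL1.
have eDE : dmul der D L = dmul der E M by rewrite !dmulB e1 e2.
have Eco m : (ord L <= mdeg m)%N -> E@_m = 0.
  move=> h; rewrite mcoeffB; apply/eqP; rewrite subr_eq0; apply/eqP.
  case: (ltngtP (mdeg m) (ord L)) h => // [hlt _|heq _].
    have z1 : L1@_m = 0.
      by apply/eqP; apply: contraTT hlt => /ord_ge; rewrite oL1 -leqNgt.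
    have z2 : tL1@_m = 0.
      by apply/eqP; apply: contraTT hlt => /ord_ge; rewrite otL1 oL1 -leqNgt.
    by rewrite z1 z2.
  have := congr1 (mcoeff m) s2; rewrite !SymE otL1 oL1 heq eqxx; done.
have oE : E != 0 -> (ord E < ord L)%N.
  move=> nE; rewrite ord_mlead // ltnNge; apply/negP => /Eco.
  by move/eqP; rewrite mleadc_eq0 (negbTE nE).
have [D0|nD] := eqVneq D 0.
  have E0 : E = 0.
    have [//|nE] := eqVneq E 0.
    have [nz _] := dmul_ord der nE nM; move: nz; rewrite -eDE D0 dmul0 eqxx //.
  by split; apply/eqP; rewrite -subr_eq0; apply/eqP.
exfalso.
have nE : E != 0.
  by apply/negP => /eqP E0; have [nz _] := dmul_ord der nD nL; move: nz; rewrite eDE E0 dmul0 eqxx.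
have [_ o1] := dmul_ord der nD nL; have [_ o2] := dmul_ord der nE nM.
have oD : ord D = 0%N.
  have h : (ord D + ord L = ord E + 1)%N by rewrite -o1 -oM -o2 eDE.
  have := oE nE; lia.
have sD : msize D == 1%N.
  move: oD; rewrite /ord; have := mmeasure_poly_eq0 mdeg D; rewrite (negbTE nD).
  by case: (msize D) => // [[|k]].
have [c nc Dc] := msize_poly1P _ sD.
apply: nrd; exists (c^-1 *: E); rewrite dmulZ -eDE Dc dmulC scalerA mulVf // scale1r //.
Qed.
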